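(* Let $\mathbb{H}^n$ be $\mathbb{R}^n$ or $\mathbb{C}^n$. The family of all $m$-element frames on $\mathbb{H}^n$ that are injective is open in the space of all $m$-element frames on $\mathbb{H}^n$, with respect to the distance $d$.
   Context: A family $\{x_k\}$ of vectors in a Hilbert space is called injective if whenever a self-adjoint operator $T$ satisfies $\langle Tx_k,x_k\rangle=0$ for all $k$, then $T=0$. For $m$-element frames $\mathcal{X}=\{x_k\}_{k=1}^m$ and $\mathcal{Y}=\{y_k\}_{k=1}^m$, the distance is $d(\mathcal{X},\mathcal{Y})^2=\sum_{k=1}^m\|x_k-y_k\|^2$. *)

(* Defs.v *)
From HB Require Import structures.
From mathcomp Require Import all_boot all_order all_algebra.
From mathcomp Require Import reals.
From mathcomp Require Import complex.
Set Implicit Arguments. Unset Strict Implicit. Unset Printing Implicit Defensive.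
Import Order.TTheory GRing.Theory Num.Theory.
Local Open Scope ring_scope.

Section FrameDefs.
(* K is the scalar field (R or C), conj its conjugation (id for R). *)
Variables (K : numFieldType) (conj : K -> K).

Definition inner (n : nat) (u v : 'cV[K]_n) : K := \sum_(i < n) u i 0 * conj (v i 0).

Definition norm2 (n : nat) (u : 'cV[K]_n) : K := \sum_(i < n) `|u i 0| ^+ 2.

Definition adjmx (n : nat) (T : 'M[K]_n) : 'M[K]_n := (map_mx conj T)^T.

Definition is_frame (n m : nat) (X : 'I_m -> 'cV[K]_n) : Prop :=
  exists A B : K, [/\ 0 < A, A <= B &
    forall x : 'cV[K]_n,
      A * norm2 x <= \sum_(k < m) `|inner x (X k)| ^+ 2 <= B * norm2 x].

Definition injective_family (n m : nat) (X : 'I_m -> 'cV[K]_n) : Prop :=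
  forall T : 'M[K]_n, adjmx T = T ->
    (forall k, inner (T *m X k) (X k) = 0) -> T = 0.

Definition frame_dist2 (n m : nat) (X Y : 'I_m -> 'cV[K]_n) : K :=
  \sum_(k < m) norm2 (X k - Y k).

Definition injective_frames_open (n m : nat) : Prop :=
  forall X : 'I_m -> 'cV[K]_n, is_frame X -> injective_family X ->
    exists eps : K, 0 < eps /\
      forall Y : 'I_m -> 'cV[K]_n, is_frame Y -> frame_dist2 X Y < eps ^+ 2 ->
        injective_family Y.

End FrameDefs.

(* Main.v *)
Require Import Defs.
From HB Require Import structures.
From mathcomp Require Import all_boot all_order all_algebra.
From mathcomp Require Import reals.
From mathcomp Require Import complex.
From mathcomp Require Import ring.
Set Implicit Arguments. Unset Strict Implicit. Unset Printing Implicit Defensive.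
Import Order.TTheory GRing.Theory Num.Theory.
Local Open Scope ring_scope.
Lemma ker_factor (F : fieldType) (N m p : nat) (A : 'M[F]_(N, m)) (P : 'M[F]_(N, p)) :
  (forall u : 'rV_N, u *m A = 0 -> u *m P = 0) -> exists B, P = A *m B.
Proof.
move=> H.
have sub : (P^T <= A^T)%MS.
  rewrite submxE; apply/eqP.
  apply: trmx_inj; rewrite trmx_mul trmx0.
  apply/row_matrixP => i; rewrite row_mul row0 trmxK; apply: H.
  have h0 : (cokermx A^T)^T *m A = 0.
    by rewrite -[X in _ *m X]trmxK -trmx_mul mulmx_coker trmx0.
  by rewrite -row_mul h0 row0.
case/submxP: sub => D HD.
by exists D^T; rewrite -[P]trmxK HD trmx_mul trmxK.
Qed.

Lemma small_mul_zero (K : numDomainType) (N : nat) (u : 'rV[K]_N) (D : 'M[K]_N) (a d : K) :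
  u *m D = a *: u -> (forall p q, `|D p q| <= d) -> N%:R * d < `|a| -> u = 0.
Proof.
move=> HD Hd Ha.
set s := \sum_(q < N) `|u 0 q|.
have s0 : 0 <= s by apply: sumr_ge0 => q _.
have key : `|a| * s <= N%:R * d * s.
  rewrite /s mulr_sumr.
  have -> : N%:R * d * \sum_(q < N) `|u 0 q| = \sum_(q < N) (d * s).
    by rewrite sumr_const card_ord mulr_natl mulrnAl.
  apply: ler_sum => q _.
  rewrite -normrM.
  have -> : a * u 0 q = (a *: u) 0 q by rewrite mxE.
  rewrite -HD mxE /s mulr_sumr (le_trans (ler_norm_sum _ _ _)) //.
  apply: ler_sum => p _; rewrite normrM mulrC ler_wpM2r //.
have sle : s <= 0.
  have h : (`|a| - N%:R * d) * s <= 0 by rewrite mulrBl subr_le0.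
  have pos : 0 < `|a| - N%:R * d by rewrite subr_gt0.
  by rewrite -(pmulr_rle0 _ pos).
have s_eq0 : s = 0 by apply/eqP; rewrite eq_le sle s0.
apply/rowP => q; rewrite mxE.
have /psumr_eq0P := s_eq0.
move=> /(_ (fun q _ => normr_ge0 _) q isT) /eqP; rewrite normr_eq0 => /eqP //.
Qed.
Section Ell.
Variables (K : numFieldType) (conj : K -> K) (n m : nat).
Variable (X : 'I_m -> 'cV[K]_n).

Lemma innerDZ (a : K) (u w x : 'cV[K]_n) :
  inner conj (a *: u + w) x = a * inner conj u x + inner conj w x.
Proof.
rewrite /inner mulr_sumr -big_split /=; apply: eq_bigr => i _.
by rewrite !mxE mulrDl mulrA.
Qed.

Lemma innerZ (a : K) (u x : 'cV[K]_n) : inner conj (a *: u) x = a * inner conj u x.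
Proof. by rewrite /inner mulr_sumr; apply: eq_bigr => i _; rewrite mxE mulrA. Qed.

Lemma innerD (u w x : 'cV[K]_n) :
  inner conj (u + w) x = inner conj u x + inner conj w x.
Proof. by rewrite /inner -big_split /=; apply: eq_bigr => i _; rewrite mxE mulrDl. Qed.

Definition ellf (v : 'rV[K]_(n * n)) : 'rV[K]_m :=
  \row_k inner conj (vec_mx v *m X k) (X k).

Fact ellf_is_semilinear : semilinear ellf.
Proof.
split=> [a u|u v]; apply/rowP => k; rewrite !mxE.
- by rewrite linearZ /= -scalemxAl innerZ.
- by rewrite linearD /= mulmxDl innerD.
Qed.
HB.instance Definition _ := GRing.isSemilinear.Build K _ _ _ ellf ellf_is_semilinear.

Definition Amx := lin1_mx ellf.

Lemma mul_Amx u : u *m Amx = ellf u.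
Proof. exact: mul_rV_lin1. Qed.

Lemma Amx_entry i j k : Amx (mxvec_index i j) k = X k j 0 * conj (X k i 0).
Proof.
rewrite /Amx /lin1_mx mxE /ellf mxE vec_mx_delta /inner.
rewrite (bigD1 i) //= big1 ?addr0.
  rewrite mxE (bigD1 j) //= big1 ?addr0; first by rewrite mxE !eqxx mul1r.
  by move=> s /negbTE sj; rewrite mxE sj andbF mul0r.
move=> r /negbTE ri; rewrite mxE big1 ?mul0r // => s _.
by rewrite mxE ri mul0r.
Qed.

End Ell.

Lemma le_sum_term (K : numDomainType) (m : nat) (F : 'I_m -> K) k :
  (forall i, 0 <= F i) -> F k <= \sum_i F i.
Proof.
by move=> H; rewrite (bigD1 k) //= lerDl sumr_ge0.
Qed.

Lemma core (K : numFieldType) (conj : K -> K) (n m : nat) (X : 'I_m -> 'cV[K]_n)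
  (P : 'M[K]_(n * n)) (a : K) :
  (forall x y, conj (x - y) = conj x - conj y) ->
  (forall x, `|conj x| = `|x|) ->
  a != 0 ->
  (forall u : 'rV[K]_(n * n), u *m Amx conj X = 0 -> u *m P = 0) ->
  (forall T : 'M[K]_n, adjmx conj T = T -> mxvec T *m P = a *: mxvec T) ->
  exists eps : K, 0 < eps /\
    forall Y : 'I_m -> 'cV[K]_n, frame_dist2 X Y < eps ^+ 2 -> injective_family conj Y.
Proof.
move=> conjB normJ a0 Hker Hherm.
have [B HB] := ker_factor Hker.
pose M := \sum_k \sum_i `|X k i 0|.
pose be := \sum_k \sum_q `|B k q|.
have M0 : 0 <= M by apply: sumr_ge0 => k _; apply: sumr_ge0.
have be0 : 0 <= be by apply: sumr_ge0 => k _; apply: sumr_ge0.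
have XM : forall k i, `|X k i 0| <= M.
  move=> k i.
  have h1 := le_sum_term (F := fun i => `|X k i 0|) i (fun _ => normr_ge0 _).
  have h2 := le_sum_term (F := fun k => \sum_i `|X k i 0|) k (fun k' => sumr_ge0 _ (fun _ _ => normr_ge0 _)).
  exact: le_trans h1 h2.
have Bbe : forall k q, `|B k q| <= be.
  move=> k q.
  have h1 := le_sum_term (F := fun q => `|B k q|) q (fun _ => normr_ge0 _).
  have h2 := le_sum_term (F := fun k => \sum_q `|B k q|) k (fun k' => sumr_ge0 _ (fun _ _ => normr_ge0 _)).
  exact: le_trans h1 h2.
pose C := (n * n)%:R * (m%:R * ((2 * M + 1) * be)).
have C0 : 0 <= C.
  by rewrite mulr_ge0 ?mulr_ge0 ?addr_ge0 ?mulr_ge0 ?ler0n.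
have na0 : 0 < `|a| by rewrite normr_gt0.
have den0 : 0 < C + `|a| + 1.
  by rewrite -addrA ltr_wpDl // addr_gt0.
pose eps := `|a| / (C + `|a| + 1).
have eps0 : 0 < eps by rewrite divr_gt0.
have eps1 : eps <= 1.
  by rewrite ler_pdivrMr // mul1r -addrA addrC -addrA lerDl addr_ge0 ?ler01.
have epsC : eps * C < `|a|.
  rewrite mulrAC ltr_pdivrMr // ltr_pM2l // -addrA ltrDl addr_gt0 ?ltr01 //.
exists eps; split => // Y Hd T Tadj TY.
have close : forall k i, `|X k i 0 - Y k i 0| <= eps.
  move=> k i; apply: ltW.
  rewrite -(ltr_pXn2r (n := 2)) // ?nnegrE ?normr_ge0 ?ltW //.
  apply: le_lt_trans Hd.
  rewrite /frame_dist2 /norm2.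
  apply: le_trans (le_sum_term _ _) => //.
    apply: le_trans (le_sum_term (F := fun i => `|(X k - Y k) i 0| ^+ 2) i _) => //.
      by rewrite !mxE.
    by move=> i'; rewrite exprn_ge0.
  by move=> k'; apply: sumr_ge0 => i' _; rewrite exprn_ge0.
pose E := Amx conj X - Amx conj Y.
have Ebound : forall p k, `|E p k| <= eps * (2 * M + 1).
  move=> p k; case/mxvec_indexP: p => i j.
  have -> : E (mxvec_index i j) k = Amx conj X (mxvec_index i j) k - Amx conj Y (mxvec_index i j) k.
    by rewrite /E; case: (Amx conj X) => fX; case: (Amx conj Y) => fY; rewrite !mxE.
  rewrite !Amx_entry.
  set xj := X k j 0; set yj := Y k j 0; set xi := X k i 0; set yi := Y k i 0.
  have -> : xj * conj xi - yj * conj yi = (xj - yj) * conj xi + yj * conj (xi - yi).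
    by rewrite conjB; ring.
  apply: le_trans (ler_normD _ _) _.
  rewrite !normrM !normJ.
  have yjb : `|yj| <= M + 1.
    have -> : yj = xj - (xj - yj) by ring.
    apply: le_trans (ler_normB _ _) _.
    by apply: lerD; [apply: XM | apply: le_trans (close _ _) eps1].
  have h1 : `|xj - yj| * `|xi| <= eps * M by apply: ler_pM => //; [apply: close | apply: XM].
  have h2 : `|yj| * `|xi - yi| <= (M + 1) * eps by apply: ler_pM => //; apply: close.
  apply: le_trans (lerD h1 h2) _.
  by rewrite le_eqVlt; apply/orP; left; apply/eqP; ring.
pose D := E *m B.
have Dbound : forall p q, `|D p q| <= m%:R * (eps * (2 * M + 1) * be).
  move=> p q; rewrite mxE.
  apply: le_trans (ler_norm_sum _ _ _) _.
  have -> : m%:R * (eps * (2 * M + 1) * be) = \sum_(k < m) (eps * (2 * M + 1) * be).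
    by rewrite sumr_const card_ord mulr_natl.
  apply: ler_sum => k _; rewrite normrM.
  by apply: ler_pM; rewrite ?normr_ge0 ?Ebound ?Bbe.
set u := mxvec T.
have uY : u *m Amx conj Y = 0.
  rewrite mul_Amx; apply/rowP => k; rewrite !mxE mxvecK.
  by rewrite TY.
have uD : u *m D = a *: u.
  by rewrite /D mulmxA /E mulmxBr uY subr0 -mulmxA -HB Hherm.
have u0 : u = 0.
  apply: (small_mul_zero uD Dbound).
  have -> : (n * n)%:R * (m%:R * (eps * (2 * M + 1) * be)) = eps * C by rewrite /C; ring.
  exact: epsC.
by rewrite -(mxvecK T) -/u u0 linear0.
Qed.

Lemma inner_tr_real (R : realType) (n : nat) (S : 'M[R]_n) (x : 'cV[R]_n) :
  inner id (S^T *m x) x = inner id (S *m x) x.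
Proof.
rewrite /inner.
transitivity (\sum_i \sum_j S j i * x j 0 * x i 0).
  by apply: eq_bigr => i _; rewrite mxE mulr_suml; apply: eq_bigr => j _; rewrite mxE.
rewrite exchange_big /=; apply: eq_bigr => j _; rewrite mxE mulr_suml.
by apply: eq_bigr => i _; rewrite mulrAC.
Qed.

Lemma real_case (R : realType) (n m : nat) : injective_frames_open (K := R) id n m.
Proof.
move=> X _ injX.
have two0 : (2 : R) != 0 by rewrite pnatr_eq0.
have hker : forall u : 'rV[R]_(n * n), u *m Amx id X = 0 ->
    u *m (1%:M + lin_mx (@trmx R n n)) = 0.
  move=> u uA.
  set S := vec_mx u.
  have Sk : forall k, inner id (S *m X k) (X k) = 0.
    move=> k; move: uA; rewrite mul_Amx => /rowP /(_ k); rewrite !mxE.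
    by [].
  have T0 : S + S^T = 0.
    apply: injX.
      by rewrite /adjmx (map_mx_id (fun _ => erefl)) linearD /= trmxK addrC.
    by move=> k; rewrite mulmxDl innerD inner_tr_real Sk addr0.
  rewrite mulmxDr mulmx1 mul_rV_lin /= -/S -{1}(vec_mxK u) -/S.
  by rewrite -linearD /= T0 linear0.
have hherm : forall T : 'M[R]_n, adjmx id T = T ->
    mxvec T *m (1%:M + lin_mx (@trmx R n n)) = 2 *: mxvec T.
  move=> T; rewrite /adjmx (map_mx_id (fun _ => erefl)) => TT.
  rewrite mulmxDr mulmx1 mul_vec_lin /= TT.
  by rewrite scaler_nat mulr2n.
have [eps [eps0 H]] := core (fun _ _ => erefl) (fun _ => erefl) two0 hker hherm.
by exists eps; split => // Y _; apply: H.
Qed.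

Section Cplx.
Variable R : realType.
Local Notation C := R[i].
Local Notation cj := (@conjc R).

Lemma adjD n (A B : 'M[C]_n) : adjmx cj (A + B) = adjmx cj A + adjmx cj B.
Proof. by apply/matrixP => i j; rewrite !mxE rmorphD. Qed.

Lemma adjZ n (a : C) (A : 'M[C]_n) : adjmx cj (a *: A) = cj a *: adjmx cj A.
Proof. by apply/matrixP => i j; rewrite !mxE rmorphM. Qed.

Lemma adjN n (A : 'M[C]_n) : adjmx cj (- A) = - adjmx cj A.
Proof. by apply/matrixP => i j; rewrite !mxE rmorphN. Qed.

Lemma adjK n (A : 'M[C]_n) : adjmx cj (adjmx cj A) = A.
Proof. by apply/matrixP => i j; rewrite !mxE conjcK. Qed.

Lemma inner_adj n (S : 'M[C]_n) (x : 'cV[C]_n) :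
  inner cj (adjmx cj S *m x) x = cj (inner cj (S *m x) x).
Proof.
rewrite /inner rmorph_sum.
transitivity (\sum_i \sum_j cj (S j i) * x j 0 * cj (x i 0)).
  by apply: eq_bigr => i _; rewrite mxE mulr_suml; apply: eq_bigr => j _; rewrite !mxE.
rewrite exchange_big /=; apply: eq_bigr => j _; rewrite mxE rmorphM rmorph_sum mulr_suml.
by apply: eq_bigr => i _; rewrite !rmorphM /= conjcK mulrAC.
Qed.

Lemma cplx_case (n m : nat) : injective_frames_open (K := C) cj n m.
Proof.
move=> X _ injX.
have one0 : (1 : C) != 0 by rewrite oner_eq0.
have hker : forall u : 'rV[C]_(n * n), u *m Amx cj X = 0 -> u *m 1%:M = 0.
  move=> u uA.
  set S := vec_mx u.
  have Sk : forall k, inner cj (S *m X k) (X k) = 0.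
    move=> k; move: uA; rewrite mul_Amx => /rowP /(_ k); rewrite !mxE.
    by [].
  have H1 : S + adjmx cj S = 0.
    apply: injX.
      by rewrite adjD adjK addrC.
    by move=> k; rewrite mulmxDl innerD inner_adj Sk rmorph0 addr0.
  have H2 : 'i *: (S - adjmx cj S) = 0.
    apply: injX.
      rewrite adjZ adjD adjN adjK.
      have -> : cj 'i = - 'i.
        by apply/eqP; rewrite eq_complex /= oppr0 !eqxx.
      by rewrite scaleNr -scalerN opprB.
    move=> k; rewrite -scalemxAl innerZ mulmxDl innerD mulNmx.
    by rewrite -scaleN1r innerZ inner_adj Sk rmorph0 mulr0 addr0 mulr0.
  have H3 : S - adjmx cj S = 0.
    move/eqP: H2; rewrite scaler_eq0 => /orP [/eqP hi|/eqP //].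
    by exfalso; move: hi; apply/eqP; rewrite eq_complex /= negb_and oner_eq0 orbT.
  have S0 : S = 0.
    have : (S + adjmx cj S) + (S - adjmx cj S) = 0 by rewrite H1 H3 addr0.
    rewrite addrACA subrr addr0 -mulr2n -scaler_nat => /eqP.
    rewrite scaler_eq0 pnatr_eq0 /= => /eqP //.
  by rewrite mulmx1 -(vec_mxK u) -/S S0 linear0.
have hherm : forall T : 'M[C]_n, adjmx cj T = T -> mxvec T *m 1%:M = 1 *: mxvec T.
  by move=> T _; rewrite mulmx1 scale1r.
have [eps [eps0 H]] := core (fun x y => rmorphB cj x y) (@normcJ R) one0 hker hherm.
by exists eps; split => // Y _; apply: H.
Qed.

End Cplx.

Theorem mainTheorem6 (R : realType) (n m : nat) :
  injective_frames_open (K := R) id n m /\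
  injective_frames_open (K := R[i]) (@conjc R) n m.
Proof. split; [exact: real_case | exact: cplx_case]. Qed.
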